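(* Let $\mathcal{G}=(\mathcal{V},\mathcal{E})$ and $\mathcal{G}'=(\mathcal{V}',\mathcal{E}')$ be finite graphs with no isolated vertices such that $\min\{|\mathcal{V}|,|\mathcal{V}'|\}\ge4$. Then $\mathcal{G}$ is contained in $\mathcal{G}'$ if and only if $D(\mathcal{G})\le D(\mathcal{G}')$.
   Context: $\mathcal{G}$ is contained in $\mathcal{G}'$ if $\mathcal{G}$ is isomorphic to a subgraph of $\mathcal{G}'$ (a subgraph $(\mathcal{V}_0,\mathcal{E}_0)$ having $\mathcal{V}_0\subseteq\mathcal{V}'$, $\mathcal{E}_0\subseteq\mathcal{E}'$). An abstract storage device (ASD) is a pair $D=(\mathcal{S}_D,\mathcal{P}_D)$, $\mathcal{S}_D$ a finite set and $\mathcal{P}_D$ a finite family of partitions of $\mathcal{S}_D$. For a partition $\pi$ of $\mathcal{S}'$ and $\phi:\mathcal{S}\to\mathcal{S}'$, $\pi\circ\phi$ is the partition of $\mathcal{S}$ with $x,y$ in the same block iff $\phi(x),\phi(y)$ are in the same block of $\pi$; $\pi\preceq\rho$ means every block of $\pi$ lies in a block of $\rho$. $D\le D'$ means there exist $\phi:\mathcal{S}_D\to\mathcal{S}_{D'}$, $\alpha:\mathcal{P}_D\to\mathcal{P}_{D'}$ with $\alpha(\pi)\circ\phi\preceq\pi$ for all $\pi\in\mathcal{P}_D$. The graph device $D(\mathcal{G})$ has state space $\mathcal{V}$ and partition set $\{\pi_e:e\in\mathcal{E}\}$, where for $e=\{u,v\}$, $\pi_e=\{\{u\},\{v\},\mathcal{V}\setminus\{u,v\}\}$.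 *)

(* Defs.v *)
From mathcomp Require Import all_boot.
Set Implicit Arguments. Unset Strict Implicit. Unset Printing Implicit Defensive.

Definition simple_graph (V : finType) (e : rel V) : Prop :=
  symmetric e /\ irreflexive e.

Definition no_isolated (V : finType) (e : rel V) : Prop :=
  forall v : V, exists u : V, e v u.

Definition contained (V V' : finType) (e : rel V) (e' : rel V') : Prop :=
  exists f : V -> V', injective f /\ forall u v, e u v -> e' (f u) (f v).

(* Abstract storage device: finite state set S and a finite family P of
   partitions of S (a partition being a set of blocks). *)
Record ASD := MkASD {
  asd_S : finType;
  asd_P : {set {set {set asd_S}}}
}.

Definition pcomp (S S' : finType) (pi : {set {set S'}}) (phi : S -> S')
  : {set {set S}} :=
  [set [set x | phi x \in B] | B : {set S'} in pi] :\ set0.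

Definition prefine (S : finType) (pi rho : {set {set S}}) : Prop :=
  forall B, B \in pi -> exists2 C, C \in rho & B \subset C.

Definition asd_le (D D' : ASD) : Prop :=
  exists (phi : asd_S D -> asd_S D')
         (alpha : {set {set asd_S D}} -> {set {set asd_S D'}}),
    forall pi, pi \in asd_P D ->
      alpha pi \in asd_P D' /\ prefine (pcomp (alpha pi) phi) pi.

Definition pi_edge (V : finType) (u v : V) : {set {set V}} :=
  [set [set u]; [set v]; ~: [set u; v]] :\ set0.

Definition graph_device (V : finType) (e : rel V) : ASD :=
  @MkASD V [set pi_edge u v | u in V, v in V & e u v].

(* Main.v *)
Require Import Defs.
From mathcomp Require Import all_boot.
From mathcomp Require Import zify.
Set Implicit Arguments. Unset Strict Implicit. Unset Printing Implicit Defensive.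

Lemma in_pi_edge (V : finType) (u v : V) D :
  (D \in pi_edge u v) = (D != set0) && [|| D == [set u], D == [set v] | D == ~: [set u; v]].
Proof. by rewrite /pi_edge in_setD1 !inE -orbA. Qed.

Lemma pi_edge_cover (V : finType) (a b w : V) : exists2 C, C \in pi_edge a b & w \in C.
Proof.
case: (w =P a) => [->|na].
  exists [set a]; last by rewrite inE.
  rewrite in_pi_edge eqxx ?orbT ?andbT /=; apply/set0Pn; exists a; by rewrite inE.
case: (w =P b) => [->|nb].
  exists [set b]; last by rewrite inE.
  rewrite in_pi_edge eqxx ?orbT ?andbT /=; apply/set0Pn; exists b; by rewrite inE.
have hw : w \in ~: [set a; b] by rewrite !inE; apply/norP; split; apply/eqP.
exists (~: [set a; b]) => //.
rewrite in_pi_edge eqxx ?orbT ?andbT /=; apply/set0Pn; by exists w.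
Qed.

Lemma refine_single (S S' : finType) (phi : S -> S') (P : {set {set S'}}) (u v x : S) C :
  prefine (Defs.pcomp P phi) (pi_edge u v) -> C \in P -> phi x \in C -> (x == u) || (x == v) ->
  forall t, phi t \in C -> t = x.
Proof.
move=> hr hC hx hxuv t ht.
have hB : [set y | phi y \in C] \in Defs.pcomp P phi.
  rewrite /Defs.pcomp in_setD1; apply/andP; split.
    apply/set0Pn; exists x; by rewrite inE.
  by apply/imsetP; exists C.
case: (hr _ hB) => D hD hsub.
have hxD : x \in D by apply: (subsetP hsub); rewrite inE.
have htD : t \in D by apply: (subsetP hsub); rewrite inE.
move: hD; rewrite in_pi_edge => /andP[_ /or3P[] /eqP hD]; subst D.
- by move: hxD htD; rewrite !inE => /eqP -> /eqP ->.
- by move: hxD htD; rewrite !inE => /eqP -> /eqP ->.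
- by rewrite !inE hxuv in hxD.
Qed.

Theorem lemma3 (V V' : finType) (e : rel V) (e' : rel V') :
  simple_graph e -> simple_graph e' ->
  no_isolated e -> no_isolated e' ->
  4 <= minn #|V| #|V'| ->
  contained e e' <-> asd_le (graph_device e) (graph_device e').
Proof.
move=> [sym irr] [sym' irr'] ni ni' hm.
have hV : 4 <= #|V| by move: hm; rewrite leq_min => /andP[].
have pi_in : forall u v, e u v -> pi_edge u v \in asd_P (graph_device e).
  by move=> u v huv; apply/imset2P; exists u v; rewrite ?inE.
split.
  move=> [f [finj hf]].
  exists f.
  exists (fun pi => if [pick p : V * V | e p.1 p.2 && (pi == pi_edge p.1 p.2)] is Some p
                    then pi_edge (f p.1) (f p.2) else set0).
  move=> pi hpi.
  case: pickP => [[u v] /= /andP[huv /eqP ->] | hnone]; last first.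
    exfalso; move: hpi => /imset2P[u v _ huv Heq].
    have := hnone (u, v); rewrite /= -Heq eqxx andbT; move: huv; rewrite inE => /andP[_ ->] //.
  split.
    apply/imset2P; exists (f u) (f v) => //; rewrite inE; exact: hf.
  move=> B /setD1P[hB0 /imsetP[C hC hBe]]; subst B.
  exists [set x | f x \in C] => //.
  rewrite in_pi_edge hB0 /=.
  move: hC; rewrite in_pi_edge => /andP[_ /or3P[] /eqP ->].
  - apply/or3P; apply: Or31; apply/eqP/setP => x; rewrite !inE (inj_eq finj) //.
  - apply/or3P; apply: Or32; apply/eqP/setP => x; rewrite !inE (inj_eq finj) //.
  - apply/or3P; apply: Or33; apply/eqP/setP => x; rewrite !inE !(inj_eq finj) //.
move=> [phi [alpha H]].
have inj : injective phi.
  move=> y y' hyy; case: (ni y) => z hz.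
  case: (H _ (pi_in _ _ hz)) => /imset2P[a b _ hb Heq] href; rewrite Heq in href.
  case: (pi_edge_cover a b (phi y)) => C hC hyC.
  symmetry; apply: (refine_single href hC hyC); first by rewrite eqxx.
  by rewrite -hyy.
exists phi; split => // u v huv.
case: (H _ (pi_in _ _ huv)) => /imset2P[a b _ hb Heq] href; rewrite Heq in href.
have hab : e' a b by move: hb; rewrite inE.
have key : forall x, (x == u) || (x == v) -> (phi x == a) || (phi x == b).
  move=> x hx; apply/negPn/negP => hn.
  have hxC : phi x \in ~: [set a; b] by rewrite !inE.
  have hC : ~: [set a; b] \in pi_edge a b.
    rewrite in_pi_edge eqxx ?orbT ?andbT /=; apply/set0Pn; by exists (phi x).
  have hall : forall t, t != x -> phi t \in [set a; b].
    move=> t ht; apply/negPn/negP => hn'.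
    have := refine_single href hC hxC hx (t:=t).
    by rewrite inE hn' => /(_ isT) /eqP; rewrite (negbTE ht).
  have hsub : phi @: (~: [set x]) \subset [set a; b].
    apply/subsetP => _ /imsetP[t ht ->]; apply: hall; by move: ht; rewrite !inE.
  have := subset_leq_card hsub; rewrite card_imset // cards2.
  have hc : #|~: [set x]| = #|V| - 1 by rewrite -(cardsC [set x]) cards1 addKn.
  rewrite hc.
  have h2 : (a != b).+1 <= 2 by case: (a != b).
  move=> hh; lia.
have huv' : u != v by apply/eqP => E; subst v; rewrite irr in huv.
have hne : phi u != phi v by rewrite (inj_eq inj).
have ku := key u; rewrite eqxx /= in ku.
have kv := key v; rewrite eqxx orbT in kv.
move: (ku isT) (kv isT) hne.
by case/orP=> /eqP ->; case/orP=> /eqP ->; rewrite ?eqxx // => _; rewrite sym'.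
Qed.
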